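(* For every integer $k \geq 1$, let $\mathcal{Q}(k)$ denote the greatest common divisor of all the sums $\sum_{i=1}^{k} Q_{n+i}$, $n \geq 0$. Then $$\mathcal{Q}(k) = \begin{cases} 2P_{k/2}, & \text{if } k \equiv 0 \pmod 4;\\ 2Q_{k/2}, & \text{if } k \equiv 2 \pmod 4;\\ 1, & \text{if } k \equiv 1,3 \pmod 4.\end{cases}$$
   Context: The Pell sequence $(P_n)_{n\ge0}$ is defined by $P_0=0$, $P_1=1$, $P_n = 2P_{n-1}+P_{n-2}$. The associated Pell sequence $(Q_n)_{n\ge0}$ is defined by $Q_0=1$, $Q_1=1$, $Q_n=2Q_{n-1}+Q_{n-2}$. *)

(* Defs.v *)
From mathcomp Require Import all_boot.
Set Implicit Arguments. Unset Strict Implicit. Unset Printing Implicit Defensive.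

Fixpoint pell (n : nat) : nat :=
  match n with
  | 0 => 0
  | 1 => 1
  | (m.+1 as p).+1 => 2 * pell p + pell m
  end.

Fixpoint apell (n : nat) : nat :=
  match n with
  | 0 => 1
  | 1 => 1
  | (m.+1 as p).+1 => 2 * apell p + apell m
  end.

Definition is_gcd_family (d : nat) (f : nat -> nat) : Prop :=
  (forall n, d %| f n) /\ (forall e, (forall n, e %| f n) -> e %| d).

Definition apell_window (k n : nat) : nat := \sum_(1 <= i < k.+1) apell (n + i).

(* Main.v *)
Require Import Defs.
From mathcomp Require Import all_boot.
From mathcomp Require Import zify.

Lemma step n : pell n.+1 = pell n + apell n /\ apell n.+1 = apell n + 2 * pell n.
Proof.
elim: n => [|n [IH1 IH2]]; first by [].
change (pell n.+2) with (2 * pell n.+1 + pell n).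
change (apell n.+2) with (2 * apell n.+1 + apell n).
split; lia.
Qed.

Lemma stepP n : pell n.+1 = pell n + apell n. Proof. exact: (step n).1. Qed.
Lemma stepQ n : apell n.+1 = apell n + 2 * pell n. Proof. exact: (step n).2. Qed.

Lemma addPQ a b : pell (a + b) = pell a * apell b + apell a * pell b /\
  apell (a + b) = apell a * apell b + 2 * pell a * pell b.
Proof.
elim: a => [|a [IH1 IH2]]; first by rewrite add0n /=; split; lia.
rewrite addSn (stepP (a+b)) (stepQ (a+b)) IH1 IH2 (stepP a) (stepQ a); split; nia.
Qed.

Lemma pellEq n : (odd n -> apell n ^ 2 + 1 = 2 * pell n ^ 2) /\
                 (~~ odd n -> apell n ^ 2 = 2 * pell n ^ 2 + 1).
Proof.
elim: n => [|n [IH1 IH2]]; first by split.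
rewrite stepP stepQ /=; case: (odd n) IH1 IH2 => /= IH1 IH2; split => // _.
- have := IH1 erefl; nia.
- have := IH2 erefl; nia.
Qed.

Lemma oddP n : odd (pell n) = odd n /\ odd (apell n).
Proof.
elim: n => [|n [IH1 IH2]]; first by [].
rewrite stepP stepQ oddD IH1 IH2 oddD oddM /= IH2.
by case: (odd n).
Qed.

Lemma copQ n : coprime (apell n) (apell n.+1).
Proof.
elim: n => [|n IH]; first by [].
rewrite /coprime; change (apell n.+2) with (2 * apell n.+1 + apell n).
by rewrite gcdnMDl gcdnC.
Qed.

Lemma copP n : coprime (pell n) (pell n.+1).
Proof.
elim: n => [|n IH]; first by [].
rewrite /coprime; change (pell n.+2) with (2 * pell n.+1 + pell n).
by rewrite gcdnMDl gcdnC.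
Qed.

Lemma window k n : apell_window k n + pell n.+1 = pell (n.+1 + k).
Proof.
elim: k => [|k IH].
  by rewrite /apell_window big_geq // addn0.
rewrite /apell_window big_nat_recr // -/(apell_window k n).
rewrite (addnS n.+1) (stepP (n.+1 + k)) -IH (addnS n) addSn /=; lia.
Qed.

Lemma evenid m h : ~~ odd h -> pell (m + 2 * h) = pell m + 2 * pell h * apell (m + h).
Proof.
move=> /(pellEq h).2 E.
have [A1 _] := addPQ m (2 * h).
have [_ A2] := addPQ m h.
have [B1 B2] := addPQ h h.
rewrite A1 A2 (_ : 2 * h = h + h); last by lia. rewrite B1 B2; nia.
Qed.

Lemma oddid m h : odd h -> pell (m + 2 * h) = pell m + 2 * apell h * pell (m + h).
Proof.
move=> /(pellEq h).1 E.
have [A1 _] := addPQ m (2 * h).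
have [A2 _] := addPQ m h.
have [B1 B2] := addPQ h h.
rewrite A1 A2 (_ : 2 * h = h + h); last by lia. rewrite B1 B2; nia.
Qed.

Lemma evencase k h d g : k = 2 * h ->
  (forall m, pell (m + k) = pell m + d * g (m + h)) ->
  (forall n, coprime (g n) (g n.+1)) ->
  is_gcd_family d (apell_window k).
Proof.
move=> Hk Hid cop.
have F n : apell_window k n = d * g (n.+1 + h).
  have := window k n; rewrite Hid; lia.
split=> [n|e He]; first by rewrite F dvdn_mulr.
have h0 := He 0; have h1 := He 1; rewrite !F in h0 h1.
have : e %| gcdn (d * g (1 + h)) (d * g (2 + h)) by rewrite dvdn_gcd h0 h1.
rewrite -muln_gcdr add1n (_ : 2 + h = h.+2) //.
by rewrite (eqP (cop h.+1)) muln1.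
Qed.

Lemma oddcase k : odd k -> is_gcd_family 1 (apell_window k).
Proof.
move=> ok; split=> [n|e He]; first exact: dvd1n.
have h0 := He 0; have h1 := He 1.
have W0 := window k 0; have W1 := window k 1.
have [A1 _] := addPQ 1 k; have [A2 _] := addPQ 2 k.
rewrite A1 in W0; rewrite A2 in W1.
have ePQ := (pellEq k).1 ok.
have oP : odd (pell k) by rewrite (oddP k).1.
move: W0 W1 h0 h1 ePQ oP.
rewrite (_ : pell 1 = 1) // (_ : apell 1 = 1) // (_ : pell 2 = 2) // (_ : apell 2 = 3) //.
move: (apell_window k 0) (apell_window k 1) (pell k) (apell k) => x y P Q.
move=> W0 W1 h0 h1 ePQ oP.
have yE : y = 2 * x + P by lia.
have eP : e %| P by move: h1; rewrite yE (dvdn_addr _ (dvdn_mull 2 h0)).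
have Qpos : 0 < Q.
  case: Q ePQ {W0 W1} => // /=; case: P oP {eP yE} => // P _ H; nia.
have xE : x = (Q - 1) + P by lia.
have eq : e %| Q - 1 by move: h0; rewrite xE (dvdn_addl _ eP).
have E2 : 2 * P ^ 2 = (Q - 1) * (Q + 1) + 2.
  case: Q ePQ Qpos {W0 W1 xE eq} => // Q ePQ _; rewrite subSS subn0 -ePQ; nia.
have e2 : e %| 2.
  have : e %| 2 * P ^ 2 by rewrite dvdn_mull // dvdn_exp.
  by rewrite E2 (dvdn_addr _ (dvdn_mulr _ eq)).
have : e %| gcdn 2 P by rewrite dvdn_gcd e2 eP.
by rewrite (eqP (_ : coprime 2 P)) // coprime2n.
Qed.

Theorem theorem16 (k : nat) : 1 <= k ->
  is_gcd_family
    (if k %% 4 == 0 then 2 * pell (k %/ 2)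
     else if k %% 4 == 2 then 2 * apell (k %/ 2)
     else 1)
    (apell_window k).
Proof.
move=> k1.
have Ek := divn_eq k 4; have Lr := ltn_mod k 4.
move: Ek Lr; set r := k %% 4; set j := k %/ 4.
case: r => [|[|[|[|r]]]] // Ek _ /=.
- rewrite (_ : k %/ 2 = 2 * j); last by lia.
  apply: (@evencase k (2 * j) _ apell) => [|m|]; [lia| |exact: copQ].
  rewrite (_ : k = 2 * (2 * j)); last by lia.
  rewrite evenid; first by [].
  by rewrite oddM.
- apply: oddcase; by rewrite Ek oddD oddM andbF.
- rewrite (_ : k %/ 2 = 2 * j + 1); last by lia.
  apply: (@evencase k (2 * j + 1) _ pell) => [|m|n]; [lia| |exact: copP].
  rewrite (_ : k = 2 * (2 * j + 1)); last by lia.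
  rewrite oddid; first by [].
  by rewrite addn1 /= oddM.
- apply: oddcase; by rewrite Ek oddD oddM andbF.
Qed.
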